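(* Let $n$ be an even positive integer that is not a power of $2$. Let $V=\{v\in\{-1,1\}^n : v_1=1\}$, $P(V)=\{\sum_{v\in W}v : W\subseteq V\}$, $g(V)=\frac12\sum_{v\in V}v$, $\mathbf{1}=(1,\dots,1)\in\mathbb{R}^n$, $M=2^{n-2}-\frac12\binom{n-1}{n/2}$, and $K_M=\{(x_1,\dots,x_n)\in\mathbb{R}^n : x_i\le M\ \forall i\}$. Then \[0\in P(V)-g(V)-\tfrac12\binom{n-1}{n/2}\mathbf{1}\subset K_M.\] *)

(* Defs.v *)
From HB Require Import structures.
From mathcomp Require Import all_boot all_order all_algebra.
From mathcomp Require Import reals.
Unset Printing Implicit Defensive.
Import Order.TTheory GRing.Theory Num.Theory.
Local Open Scope ring_scope.

Definition sign_vec (R : nzRingType) (n : nat) (s : {ffun 'I_n -> bool}) : 'rV[R]_n :=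
  \row_i (if s i then 1 else -1).

(* Index set of V = { v in {-1,1}^n : v_1 = 1 } (v_1 is the coordinate of index 0). *)
Definition Vidx (n : nat) : {set {ffun 'I_n -> bool}} :=
  [set s : {ffun 'I_n -> bool} | [forall i : 'I_n, (nat_of_ord i == 0)%N ==> s i]].

Definition inV (R : nzRingType) (n : nat) (v : 'rV[R]_n) : Prop :=
  exists2 s, s \in Vidx n & v = sign_vec R n s.

(* P(V) = { sum_{v in W} v : W subset of V }.  Since sign_vec is injective,
   subsets of V correspond exactly to subsets of Vidx n. *)
Definition inPV (R : nzRingType) (n : nat) (x : 'rV[R]_n) : Prop :=
  exists2 W : {set {ffun 'I_n -> bool}}, W \subset Vidx n &
    x = \sum_(s in W) sign_vec R n s.

Definition gV (R : fieldType) (n : nat) : 'rV[R]_n :=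
  2^-1 *: \sum_(s in Vidx n) sign_vec R n s.

Definition ones (R : nzRingType) (n : nat) : 'rV[R]_n := \row_i 1.

Definition cst (R : fieldType) (n : nat) : R := ('C(n.-1, n./2))%:R / 2.

Definition Mval (R : fieldType) (n : nat) : R := 2 ^+ (n - 2) - cst R n.

Definition inK (R : numFieldType) (n : nat) (M : R) (x : 'rV[R]_n) : Prop :=
  forall i : 'I_n, x ord0 i <= M.

Definition inShift (R : fieldType) (n : nat) (y : 'rV[R]_n) : Prop :=
  exists2 x : 'rV[R]_n, inPV R n x & y = x - gV R n - cst R n *: ones R n.

(* Main.v *)
Require Import Defs.
From HB Require Import structures.
From mathcomp Require Import all_boot all_order all_algebra.
From mathcomp Require Import reals.
From mathcomp Require Import zify ring lra.
Import Order.TTheory GRing.Theory Num.Theory.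

Lemma bits_logn N : 0 < N ->
  logn 2 'C(N.*2, N) = \sum_(0 <= j < N.*2) (N %/ 2 ^ j) %% 2.
Proof.
move=> N0.
have hf := bin_fact (leq_addr N N).
rewrite addnK addnn in hf.
have := congr1 (logn 2) hf.
have c0 : 0 < 'C(N.*2, N) by rewrite bin_gt0 -addnn leq_addr.
have f0 : 0 < N`! * N`! by rewrite muln_gt0 fact_gt0.
rewrite (lognM _ c0 f0) (lognM _ (fact_gt0 N) (fact_gt0 N)).
rewrite !logn_fact // !big_add1 /=.
have -> : \sum_(0 <= i < N) N %/ 2 ^ i.+1 = \sum_(0 <= i < N.*2) N %/ 2 ^ i.+1.
  have NN : N <= N.*2 by rewrite -addnn leq_addr.
  rewrite (big_cat_nat (leq0n N) NN) /= [X in _ = _ + X]big1_seq ?addn0 //.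
  move=> i /andP[_]; rewrite mem_index_iota => /andP[Ni _].
  apply: divn_small; apply: (leq_ltn_trans Ni); apply: (ltn_trans (ltn_expl i (isT : 1 < 2))).
  by rewrite ltn_exp2l.
have -> : \sum_(0 <= i < N.*2) N.*2 %/ 2 ^ i.+1 =
   \sum_(0 <= i < N.*2) (N %/ 2 ^ i.+1).*2 + \sum_(0 <= i < N.*2) (N %/ 2 ^ i) %% 2.
  rewrite -big_split /=; apply: eq_bigr => i _.
  rewrite expnS -mul2n divnMl // {1}(divn_eq (N %/ 2 ^ i) 2) -divnMA -expnSr.
  by rewrite -expnS muln2.
rewrite [X in _ = X + _](eq_bigr (fun i => N %/ 2 ^ i.+1 + N %/ 2 ^ i.+1)); last by move=> i _; rewrite addnn.
rewrite big_split /=.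
set S := \sum_(0 <= i < N.*2) N %/ 2 ^ i.+1.
by move=> h; apply/eqP; rewrite -(eqn_add2l (S + S)) addnC h.
Qed.

Lemma four_dvd_bin N : 0 < N -> ~ (exists a, N = 2 ^ a) -> 4 %| 'C(N.*2, N).
Proof.
move=> N0 Np.
have c0 : 0 < 'C(N.*2, N) by rewrite bin_gt0 -addnn leq_addr.
rewrite -[4]/(2 ^ 2) (@pfactor_dvdn 2 2 _ isT c0) bits_logn //.
case: (pfactor_coprime (isT : prime 2) N0) => M cM NM.
set a := logn 2 N in NM.
have ha : N %/ 2 ^ a = M by rewrite NM mulnK ?expn_gt0.
have oM : odd M by rewrite -coprime2n.
have := trunc_log_bounds (isT : 1 < 2) N0.
set b := trunc_log 2 N => /andP[lb ub].
have hb : N %/ 2 ^ b = 1.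
  apply/eqP; rewrite eqn_leq -ltnS ltn_divLR ?expn_gt0 // -expnS ub /=.
  by rewrite divn_gt0 ?expn_gt0.
have ab : a != b.
  apply/eqP=> eab; apply: Np; exists a.
  by rewrite NM -ha eab hb mul1n.
have a2N : a < N.*2.
  apply: (leq_trans (ltn_expl a (isT : 1 < 2))).
  rewrite -addnn (leq_trans _ (leq_addr N N)) // NM leq_pmull //.
  by case: M oM {cM NM ha}.
have b2N : b < N.*2.
  apply: (leq_trans (ltn_expl b (isT : 1 < 2))).
  by rewrite -addnn (leq_trans lb (leq_addr N N)).
rewrite big_mkord (bigD1 (Ordinal a2N)) //= (bigD1 (Ordinal b2N)) /=; last first.
  by apply/eqP => -[]; apply/eqP; rewrite eq_sym.
rewrite ha hb modn2 oM /= addnA.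
by rewrite leq_addr.
Qed.

Section Comb.
Variable p : nat.
Local Notation m := (p.*2.+3).
Local Notation k := (p.+1).
Local Notation FT := {ffun 'I_m -> bool}.

Definition tr (f : FT) := #|[set j | f j]|.
Definition rotf (t : 'I_m) (f : FT) : FT := [ffun j => f (j + t)%R].
Definition deg (F : {set FT}) (i : 'I_m) := #|[set f in F | f i]|.

Lemma rotfK t u f : rotf t (rotf u f) = rotf (u + t)%R f.
Proof. by apply/ffunP => j; rewrite !ffunE -addrA (addrC t u). Qed.

Lemma rotf0 f : rotf 0%R f = f.
Proof. by apply/ffunP => j; rewrite !ffunE addr0. Qed.

Lemma rotfN t f : rotf (- t)%R (rotf t f) = f.
Proof. by rewrite rotfK subrr rotf0. Qed.

Lemma rotf_inj t : injective (rotf t).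
Proof. by move=> f g e; rewrite -(rotfN t f) e rotfN. Qed.

Lemma tr_rot t f : tr (rotf t f) = tr f.
Proof.
rewrite /tr -[RHS](card_preimset _ (addIr t)); apply: eq_card => j.
by rewrite !inE ffunE.
Qed.

Lemma deg_sum F i : deg F i = \sum_(f in F) (f i : nat).
Proof.
rewrite /deg -sum1_card [LHS]big_mkcond [RHS]big_mkcond /=; apply: eq_bigr => f _.
by rewrite inE; case: (f i); case: (f \in F).
Qed.

Lemma tr_sum f : tr f = \sum_(j : 'I_m) (f j : nat).
Proof.
rewrite /tr -sum1_card big_mkcond /=; apply: eq_bigr => j _.
by rewrite inE; case: (f j).
Qed.

Lemma regular (F : {set FT}) :
  (forall t f, (rotf t f \in F) = (f \in F)) ->
  forall i, deg F i * m = \sum_(f in F) tr f.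
Proof.
move=> inv.
have hsh : forall i t, deg F (i + t)%R = deg F i.
  move=> i t; rewrite /deg -[RHS](card_preimset _ (@rotf_inj t)); apply: eq_card => f.
  rewrite !inE ffunE inv. done.
have hall : forall i, deg F i = deg F 0%R.
  move=> i. rewrite -(hsh 0%R i) add0r. done.
move=> i.
have -> : deg F i * m = \sum_(j : 'I_m) deg F j.
  rewrite (eq_bigr (fun _ => deg F i)).
    rewrite sum_nat_const card_ord mulnC. done.
  move=> j _. rewrite hall (hall i). done.
rewrite (eq_bigr (fun j => \sum_(f in F) (f j : nat))); last by move=> j _; rewrite deg_sum.
rewrite [RHS](eq_bigr _ (fun f _ => tr_sum f)).
exact: exchange_big.
Qed.




Lemma tr_le f : tr f <= m.
Proof. by rewrite /tr -[X in _ <= X]card_ord max_card. Qed.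

Definition Lay j := [set f : FT | tr f == j].

Lemma card_lay j : #|Lay j| = 'C(m, j).
Proof.
rewrite -[X in 'C(X, _)]card_ord -card_draws.
have inj : injective (fun f : FT => [set x | f x]).
  move=> f g e; apply/ffunP => x.
  by move/setP: e => /(_ x); rewrite !inE.
rewrite -(card_imset _ inj); apply: eq_card => A.
rewrite inE; apply/imsetP/idP.
  by case=> f; rewrite inE => fin ->.
move=> hA; exists [ffun x => x \in A]; first by rewrite inE /tr; apply: etrans hA; congr (_ == _); apply: eq_card => x; rewrite !inE ffunE.
by apply/setP => x; rewrite !inE ffunE.
Qed.

Lemma lay_rot j t f : (rotf t f \in Lay j) = (f \in Lay j).
Proof. by rewrite !inE tr_rot. Qed.

Definition comp (f : FT) : FT := [ffun j => ~~ f j].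

Lemma tr_comp f : tr (comp f) = m - tr f.
Proof.
have e : [set j | comp f j] = ~: [set j | f j].
  by apply/setP => j; rewrite !inE ffunE.
have := cardsC [set j | f j]; rewrite card_ord /tr e; lia.
Qed.

Definition Wp := [set f : FT | k < tr f].

Lemma card_Wp : #|Wp| * 2 = 2 ^ m.
Proof.
have := cardsC Wp; rewrite card_ffun card_bool card_ord => <-.
have inj : injective comp.
  by move=> f g e; apply/ffunP => x; have := congr1 (fun h : FT => h x) e; rewrite /= !ffunE => /negb_inj.
rewrite muln2 -addnn; congr (_ + _).
rewrite -(card_preimset _ inj); apply: eq_card => f.
rewrite !inE tr_comp; have := tr_le f; lia.
Qed.

Definition flip (i : 'I_m) (f : FT) : FT := [ffun j => if j == i then ~~ f j else f j].

Lemma flipK i : involutive (flip i).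
Proof. by move=> f; apply/ffunP => j; rewrite !ffunE; case: eqP => // _; rewrite negbK. Qed.

Lemma tr_flip i f : tr (flip i f) + f i = tr f + ~~ f i.
Proof.
rewrite !tr_sum (bigD1 i) //= [in RHS](bigD1 i) //= ffunE eqxx.
rewrite (eq_bigr (fun j => (f j : nat))); last by move=> j /negbTE ji; rewrite ffunE ji.
by case: (f i) => /=; lia.
Qed.

Lemma deg_split F i : deg F i + #|[set f in F | ~~ f i]| = #|F|.
Proof.
rewrite -(cardsID [set f : FT | f i] F) /deg; congr (_ + _); apply: eq_card => f; by rewrite !inE; case: (f \in F); case: (f i).
Qed.

Lemma deg_Wp i : deg Wp i * 2 = #|Wp| + deg (Lay k.+1) i.
Proof.
rewrite -(deg_split Wp i).
have -> : deg Wp i = #|[set f in Wp | f i & k.+1 < tr f]| + deg (Lay k.+1) i.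
  rewrite /deg -[LHS](cardsID [set f : FT | k.+1 < tr f]); congr (_ + _); apply: eq_card => f; rewrite !inE.
    by rewrite andbA.
  by case: (f i); rewrite ?andbF ?andbT //; lia.
have -> : #|[set f in Wp | f i & k.+1 < tr f]| = #|[set f in Wp | ~~ f i]|.
  rewrite -[RHS](card_preimset _ (can_inj (flipK i))); apply: eq_card => f; rewrite !inE ffunE eqxx negbK.
  have := tr_flip i f; case: (f i) => /=; lia.
set A := #|[set f in Wp | ~~ f i]|; set D := deg (Lay k.+1) i; lia.
Qed.


Definition psi (f : FT) : 'I_m := ((\sum_(j | f j) j) *+ 2)%R.

Lemma sig_rot t f : (\sum_(j | rotf t f j) j)%R = (\sum_(j | f j) j - t *+ tr f)%R.
Proof.
rewrite (reindex_inj (addIr (- t)%R)) /=.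
rewrite (eq_bigl (fun j => f j)); last by move=> j; rewrite ffunE subrK.
rewrite sumrB sumr_const; congr (_ - _)%R; congr (_ *+ _)%R.
by rewrite /tr; apply: eq_card => j; rewrite !inE.
Qed.

Lemma m0 : ((p.*2.+3)%:R : 'I_m)%R = 0%R.
Proof. exact: (pchar_Zp (isT : 1 < p.*2.+3)). Qed.

Lemma psi_rot t f : f \in Lay k -> psi (rotf t f) = (psi f + t)%R.
Proof.
rewrite inE => /eqP trf; rewrite /psi sig_rot trf mulrnBl.
have e : (t *+ k *+ 2 + t = 0)%R.
  rewrite -mulrnA -mulrSr -mulr_natr.
  have -> : (k * 2).+1 = p.*2.+3 by rewrite muln2 doubleS.
  by rewrite m0 mulr0.
have e2 : (- (t *+ k *+ 2) = t)%R.
  by apply/eqP; rewrite eq_sym -addr_eq0 addrC e.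
by rewrite e2.
Qed.

Definition Cl (t : 'I_m) := [set f in Lay k | psi f == t].

Lemma card_Cl t : #|Cl t| = #|Cl 0%R|.
Proof.
rewrite -[RHS](card_preimset _ (@rotf_inj (- t)%R)); apply: eq_card => f.
rewrite [in RHS]inE [in RHS]inE lay_rot.
rewrite [in LHS]inE; case fin : (f \in Lay k) => //=.
by rewrite psi_rot // subr_eq0.
Qed.

Lemma card_Lk : #|Lay k| = #|Cl 0%R| * m.
Proof.
rewrite -sum1_card (partition_big psi predT) //=.
rewrite (eq_bigr (fun _ => #|Cl 0%R|)).
  by rewrite sum_nat_const card_ord mulnC.
move=> t _; rewrite -(card_Cl t) -sum1_card; apply: eq_bigl => f; by rewrite !inE.
Qed.

Lemma Y_props : let Y := #|Cl 0%R| in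
  'C(m, k) = Y * m /\ 'C(m, k.+1) = Y * m.
Proof.
move=> Y; rewrite -card_lay card_Lk; split=> //.
rewrite -card_Lk card_lay -(bin_sub (_ : k <= m)); last by rewrite -addnn; lia.
by congr 'C(_, _); rewrite -addnn; lia.
Qed.


Lemma sum_tr_lay (F : {set FT}) j : {subset F <= Lay j} -> \sum_(f in F) tr f = #|F| * j.
Proof.
move=> sub; rewrite -sum_nat_const; apply: eq_bigr => f /sub; by rewrite inE => /eqP.
Qed.

Lemma deg_U (A B : {set FT}) i : A :&: B = set0 ->
  deg (A :|: B) i = deg A i + deg B i /\ #|A :|: B| = #|A| + #|B|.
Proof.
move=> AB; split; last by rewrite -cardsUI AB cards0 addn0.
rewrite /deg -cardsUI.
have -> : [set f in A | f i] :&: [set f in B | f i] = set0.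
  apply/setP => f; rewrite !inE; move/setP: AB => /(_ f); rewrite !inE.
  by case: (f \in A); case: (f \in B); case: (f i).
rewrite cards0 addn0; apply: eq_card => f; rewrite !inE; by case: (f \in A); case: (f \in B); case: (f i).
Qed.

Lemma exists_W (Np : ~ exists a, p.+2 = 2 ^ a) :
  exists W : {set FT}, exists c,
    'C(m, k.+1) = c.*2 /\ #|W| * 2 = 2 ^ m + c.*2 /\ forall i, deg W i * 2 = #|W| + c.
Proof.
have [YC1 YC2] := Y_props.
set Y := #|Cl 0%R| in YC1 YC2.
have Yev : ~~ odd Y.
  have h := @four_dvd_bin p.+2 isT Np.
  have e : 'C((p.+2).*2, p.+2) = 2 * (Y * m) by rewrite [(p.+2).*2]/= binS YC1 YC2 mul2n addnn.
  move: h; rewrite e; rewrite -[4]/(2 * 2) dvdn_pmul2l // Gauss_dvdl; last by rewrite coprime2n /= odd_double.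
  by rewrite dvdn2.
set r := Y./2.
have Yr : Y = r * 2 by rewrite muln2 halfK (negbTE Yev) subn0.
have [R RC Rc] : exists2 R : {set FT}, R \subset Cl 0%R & #|R| = r.
  have : 0 < #|[set A : {set FT} | A \subset Cl 0%R & #|A| == r]|.
    by rewrite cards_draws bin_gt0 -/Y Yr; lia.
  rewrite card_gt0 => /set0Pn [R]; rewrite inE => /andP[h1 /eqP h2]; by exists R.
pose H := [set rotf q.2 q.1 | q in setX R [set: 'I_m]].
have RL : forall f, f \in R -> f \in Lay k /\ psi f = 0%R.
  by move=> f /(subsetP RC); rewrite inE => /andP[-> /eqP].
have HL : {subset H <= Lay k}.
  move=> g /imsetP [[f t]]; rewrite inE /= => /andP[fR _] ->.
  by rewrite lay_rot; case: (RL f fR).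
have Hrot1 : forall u g, g \in H -> rotf u g \in H.
  move=> u g /imsetP [[f t]]; rewrite inE /= => /andP[fR _] ->.
  rewrite rotfK; apply/imsetP; exists (f, (t + u)%R) => //.
  by rewrite inE fR inE.
have Hrot : forall u g, (rotf u g \in H) = (g \in H).
  move=> u g; apply/idP/idP; last exact: Hrot1.
  by move=> /(Hrot1 (- u)%R); rewrite rotfN.
have cH : #|H| = r * m.
  rewrite card_in_imset ?cardsX ?Rc ?cardsT ?card_ord //.
  move=> [f t] [f' t']; rewrite !inE /= => /andP[fR _] /andP[f'R _] e.
  have tt' : t = t'.
    have := congr1 psi e; rewrite !psi_rot; try by case: (RL _ fR); try by case: (RL _ f'R).
    by case: (RL _ fR) => _ ->; case: (RL _ f'R) => _ ->; rewrite !add0r.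
  by move: e; rewrite tt' => /rotf_inj ->.
have dH : forall i, deg H i = k * r.
  move=> i; apply/eqP; rewrite -(eqn_pmul2r (isT : 0 < m)) (regular H Hrot) (sum_tr_lay H k HL) cH.
  by rewrite (mulnC k r) mulnAC.
have dL : forall i, deg (Lay k.+1) i = k.+1 * Y.
  move=> i; apply/eqP; rewrite -(eqn_pmul2r (isT : 0 < m)) (regular (Lay k.+1) (fun t f => lay_rot _ t f)).
  rewrite (@sum_tr_lay (Lay k.+1) k.+1) // card_lay YC2.
  by rewrite (mulnC k.+1 Y) mulnAC.
have WH : Wp :&: H = set0.
  apply/setP => g; rewrite !inE; case gH : (g \in H); rewrite ?andbF // andbT.
  by have := HL g gH; rewrite inE => /eqP ->; rewrite ltnn.
exists (Wp :|: H), (r * m); split; first by rewrite YC2 Yr; nia.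
have cW := card_Wp.
have [_ cU] := deg_U Wp H 0%R WH.
split.
  rewrite cU cH; move: cW; set a := #|Wp|; set E := 2 ^ m; set RM := r * m; lia.
move=> i; have [-> _] := deg_U Wp H i WH.
have := deg_Wp i; rewrite dH cU cH dL Yr.
set a := #|Wp|; set d := deg Wp i; nia.
Qed.

End Comb.

Local Open Scope ring_scope.

Section Final.
Variable R : realType.
Variable p : nat.
Local Notation m := (p.*2.+3).
Local Notation FT := {ffun 'I_m -> bool}.
Local Notation ST := {ffun 'I_m.+1 -> bool}.

Definition ext (f : FT) : ST := [ffun i => if unlift ord0 i is Some j then f j else true].
Definition restr (s : ST) : FT := [ffun j => s (lift ord0 j)].

Lemma ext0 f : ext f ord0 = true.
Proof. by rewrite ffunE unlift_none. Qed.

Lemma extS f (j : 'I_m) : ext f (lift ord0 j) = f j.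
Proof. by rewrite ffunE liftK. Qed.

Lemma ext_inj : injective ext.
Proof. by move=> f g e; apply/ffunP=> j; rewrite -extS e extS. Qed.

Lemma inVidx s : (s \in Vidx m.+1) = s ord0.
Proof.
rewrite inE; apply/forallP/idP => [h | h i]; first by have := h ord0.
apply/implyP => /eqP i0; have -> : i = ord0 by apply/val_inj. done.
Qed.

Lemma restrK s : s \in Vidx m.+1 -> ext (restr s) = s.
Proof.
rewrite inVidx => h; apply/ffunP => i; rewrite ffunE; case: unliftP => [j -> | ->] //.
by rewrite ffunE.
Qed.

Lemma Vidx_ext : Vidx m.+1 = ext @: setT.
Proof.
apply/setP => s; apply/idP/imsetP => [h | [f _ ->]].
  by exists (restr s); rewrite ?restrK.
by rewrite inVidx ext0.
Qed.

Lemma card_Vidx : #|Vidx m.+1| = (2 ^ m)%N.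
Proof.
rewrite Vidx_ext card_imset ?cardsT ?card_ffun ?card_bool ?card_ord //; exact: ext_inj.
Qed.

Lemma Vidx_j (j : 'I_m) : [set s in Vidx m.+1 | s (lift ord0 j)] = ext @: [set f : FT | f j].
Proof.
apply/setP => s; rewrite inE; apply/andP/imsetP => [[h1 h2] | [f hf ->]].
  by exists (restr s); rewrite ?restrK // inE ffunE.
by rewrite inVidx ext0 extS; rewrite inE in hf.
Qed.

Lemma deg_T (j : 'I_m) : (#|[set f : FT | f j]| * 2 = 2 ^ m)%N.
Proof.
have := deg_split p [set: FT] j; rewrite cardsT card_ffun card_bool card_ord => <-.
rewrite /deg muln2 -addnn; congr (_ + _); first by apply: eq_card => f; rewrite !inE.
rewrite -[RHS](card_preimset _ (can_inj (flipK p j))); apply: eq_card => f.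
by rewrite !inE ffunE eqxx negbK.
Qed.

Lemma sign_sum (T : finType) (W : {set {ffun T -> bool}}) i :
  \sum_(s in W) (if s i then 1 else -1 : R) = (#|[set s in W | s i]|)%:R *+ 2 - #|W|%:R.
Proof.
rewrite (eq_bigr (fun s : {ffun T -> bool} => ((s i : nat)%:R *+ 2 - 1 : R))); last first.
  by move=> s _; case: (s i); rewrite /= ?mulr1n ?mulr0n ?mul0rn ?sub0r // mulr2n addrK.
rewrite sumrB sumrMnl -natr_sum sumr_const; congr (_%:R *+ 2 - _).
rewrite -sum1_card [LHS]big_mkcond [RHS]big_mkcond /=; apply: eq_bigr => s _.
by rewrite inE; case: (s i); case: (s \in W).
Qed.

Lemma sv_entry n (s : {ffun 'I_n -> bool}) i : sign_vec R n s ord0 i = if s i then 1 else -1.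
Proof. by rewrite mxE. Qed.

Lemma sum_entry n (W : {set {ffun 'I_n -> bool}}) i :
  (\sum_(s in W) sign_vec R n s) ord0 i = \sum_(s in W) (if s i then 1 else -1 : R).
Proof. by rewrite summxE; apply: eq_bigr => s _; rewrite sv_entry. Qed.

Lemma gV0 : gV R m.+1 ord0 ord0 = 2^-1 * (2 ^ m)%:R.
Proof.
rewrite /gV mxE sum_entry sign_sum.
have -> : [set s in Vidx m.+1 | s ord0] = Vidx m.+1.
  by apply/setP => s; rewrite inE; case h : (s \in Vidx m.+1) => //=; rewrite -inVidx.
by rewrite card_Vidx mulr2n addrK.
Qed.

Lemma gVS (j : 'I_m) : gV R m.+1 ord0 (lift ord0 j) = 0.
Proof.
rewrite /gV mxE sum_entry sign_sum Vidx_j card_imset; last exact: ext_inj.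
by rewrite card_Vidx -(deg_T j) natrM mulr_natr subrr mulr0.
Qed.

End Final.

Arguments ext {p}. Arguments restr {p}.
Arguments ext0 {p}. Arguments extS {p}. Arguments ext_inj {p}. Arguments inVidx {p}.
Arguments restrK {p}. Arguments Vidx_ext {p}. Arguments card_Vidx {p}. Arguments Vidx_j {p}.
Arguments deg_T {p}. Arguments sign_sum {R}. Arguments sv_entry {R}. Arguments sum_entry {R}.
Arguments gV0 {R p}. Arguments gVS {R p}. Arguments exists_W {p}.

Lemma gV0u (R : realType) p :
  2^-1 * (\sum_(s in Vidx p.*2.+4) sign_vec R p.*2.+4 s) ord0 ord0 = 2^-1 * (2 ^ p.*2.+3)%:R.
Proof. by have := @gV0 R p; rewrite /gV mxE. Qed.

Lemma gVSu (R : realType) p (j : 'I_(p.*2.+3)) :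
  2^-1 * (\sum_(s in Vidx p.*2.+4) sign_vec R p.*2.+4 s) ord0 (lift ord0 j) = 0.
Proof. by have := @gVS R p j; rewrite /gV mxE. Qed.

Lemma cstE (R : realType) p : cst R (p.*2.+4) = ('C(p.*2.+3, p.+2))%:R / 2.
Proof. by rewrite /cst /= doubleK. Qed.

Lemma MvalE (R : realType) p : Mval R (p.*2.+4) = 2 ^+ (p.*2.+2) - cst R (p.*2.+4).
Proof. by rewrite /Mval !subSS subn0. Qed.

Lemma main_p (R : realType) p (Np : ~ exists a, p.+2 = (2 ^ a)%N) :
  inShift R (p.*2.+4) (0 : 'rV[R]_(p.*2.+4)) /\
  (forall y : 'rV[R]_(p.*2.+4), inShift R (p.*2.+4) y -> inK R (p.*2.+4) (Mval R (p.*2.+4)) y).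
Proof.
have e2 : (2 ^ p.*2.+3)%:R = 2 * (2 ^+ p.*2.+2 : R) by rewrite natrX exprS.
have dbl : forall x : nat, (x.*2)%:R = (x%:R * 2 :> R) by move=> x; rewrite -muln2 natrM.
split.
  have [W' [c [hC [hW hd]]]] := exists_W Np.
  exists (\sum_(s in ext @: W') sign_vec R _ s).
    exists (ext @: W') => //; rewrite Vidx_ext; apply: imsetS; exact: subsetT.
  apply/rowP => i; rewrite !mxE sum_entry (big_imset _ (in2W (@ext_inj p))) /= cstE hC.
  have hW' : (#|W'|%:R * 2 : R) = (2 ^ p.*2.+3)%:R + c%:R * 2 by rewrite -natrM hW natrD dbl.
  case: (unliftP ord0 i) => [j -> | ->].
    rewrite (eq_bigr (fun f : {ffun 'I_(p.*2.+3) -> bool} => (if f j then 1 else -1 : R))); last by move=> f _; rewrite extS.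
    rewrite sign_sum gVSu dbl.
    have := congr1 (fun x => x%:R : R) (hd j); rewrite /= natrD !natrM /deg => h.
    lra.
  rewrite (eq_bigr (fun f : {ffun 'I_(p.*2.+3) -> bool} => (1 : R))); last by move=> f _; rewrite ext0.
  rewrite sumr_const gV0u dbl.
  lra.
move=> y [x [W WV ->] ->] i.
rewrite !mxE sum_entry sign_sum MvalE.
case: (unliftP ord0 i) => [j -> | ->].
  rewrite gVSu.
  set a := #|[set s in W | s (lift ord0 j)]|.
  have aW : (a <= #|W|)%N by apply: subset_leq_card; apply/subsetP => s; rewrite inE => /andP[].
  have ad : (a <= #|[set f : {ffun 'I_(p.*2.+3) -> bool} | f j]|)%N.
    rewrite -(card_imset _ (@ext_inj p)) -Vidx_j; apply: subset_leq_card.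
    by apply/subsetP => s; rewrite inE => /andP[sW si]; rewrite inE (subsetP WV s sW) si.
  have dT := congr1 (fun x => x%:R : R) (deg_T j); rewrite /= natrM e2 in dT.
  move: aW ad; rewrite -!(ler_nat R) => aW ad.
  rewrite cstE; lra.
have -> : [set s in W | s ord0] = W.
  by apply/setP => s; rewrite inE; case h : (s \in W) => //=; rewrite -inVidx; apply: (subsetP WV).
rewrite gV0u e2 cstE.
have : (#|W| <= 2 ^ p.*2.+3)%N by rewrite -card_Vidx; apply: subset_leq_card.
rewrite -(ler_nat R) e2 => hWl.
lra.
Qed.

Theorem lemma4p4 (R : realType) (n : nat) (n_pos : (0 < n)%N) (n_even : ~~ odd n)
  (n_not_pow2 : ~ (exists k : nat, n = (2 ^ k)%N)) :
  inShift R n (0 : 'rV[R]_n) /\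
  (forall y : 'rV[R]_n, inShift R n y -> inK R n (Mval R n) y).
Proof.
have nN : n = (n./2).*2 by rewrite -[LHS]odd_double_half (negbTE n_even) add0n.
have N2 : (1 < n./2)%N.
  case: (n./2) nN => [|[|N]] // nN'; first by rewrite nN' in n_pos.
  by exfalso; apply: n_not_pow2; exists 1%N.
have Np : ~ exists a, (n./2 - 2).+2 = (2 ^ a)%N.
  move=> [a ha]; apply: n_not_pow2; exists a.+1.
  rewrite nN expnS -ha mul2n; congr (_.*2); lia.
have -> : n = (n./2 - 2).*2.+4 by rewrite {1}nN; lia.
exact: main_p.
Qed.
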